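(* Let $G = K \rtimes_\varphi \langle t\rangle$ be a finitely generated group, where $K$ is abelian, $\langle t\rangle$ is infinite cyclic and $\varphi\in\mathrm{Aut}(K)$, and let $S$ be a finite symmetric generating set of $G$. Let $P_\varphi=\{a\in K:\ \varphi^n(a)=a\text{ for some } n\ge1\}$. Then the relative growth $r\mapsto |P_\varphi\cap S^r|$ is bounded above by a polynomial in $r$.
   Context: $K$ is written additively and $tkt^{-1}=\varphi(k)$. $S^r$ is the set of elements of word length at most $r$ with respect to $S$. *)

(* Defs.v *)
(* The group G = K ⋊_phi <t> is modelled concretely as pairs
   (k, m) : K * int, standing for k t^m, with K an additive abelian group
   (zmodType) and phi an additive automorphism of K (given with its inverse). *)
From mathcomp Require Import all_boot all_order all_algebra.
Set Implicit Arguments. Unset Strict Implicit. Unset Printing Implicit Defensive.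
Import Order.TTheory GRing.Theory Num.Theory.
Local Open Scope ring_scope.

Section SemiDirect.
Variables (K : zmodType) (phi phiinv : K -> K).

Definition zpow (m : int) : K -> K :=
  match m with
  | Posz n => iter n phi
  | Negz n => iter n.+1 phiinv
  end.

(* (a t^m) (b t^n) = (a + phi^m b) t^(m+n), since t k t^-1 = phi k *)
Definition sd_mul (g h : K * int) : K * int :=
  (g.1 + zpow g.2 h.1, g.2 + h.2).
Definition sd_one : K * int := (0, 0).
Definition sd_inv (g : K * int) : K * int :=
  (- zpow (- g.2) g.1, - g.2).

Definition sd_prod (w : seq (K * int)) : K * int := foldr sd_mul sd_one w.

Definition symmetric_set (S : seq (K * int)) : Prop :=
  forall g, g \in S -> sd_inv g \in S.
Definition generates (S : seq (K * int)) : Prop :=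
  forall g : K * int, exists w : seq (K * int), all (mem S) w /\ g = sd_prod w.

Definition in_ball (S : seq (K * int)) (r : nat) (g : K * int) : Prop :=
  exists w : seq (K * int), [/\ all (mem S) w, (size w <= r)%N & g = sd_prod w].

Definition in_Pphi (a : K) : Prop := exists n : nat, (1 <= n)%N /\ iter n phi a = a.
End SemiDirect.

(* Main.v *)
Require Import Defs.
From mathcomp Require Import all_boot all_order all_algebra.
From Stdlib Require Import Classical.
From mathcomp Require Import zify.
Set Implicit Arguments. Unset Strict Implicit. Unset Printing Implicit Defensive.
Import Order.TTheory GRing.Theory Num.Theory.
Local Open Scope ring_scope.

Definition addfun (K : zmodType) (f : K -> K) := forall x y, f (x + y) = f x + f y.

Section AddFun.
Variables (K : zmodType) (f : K -> K) (fD : addfun f).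
Lemma af0 : f 0 = 0.
Proof. by apply: (@addrI _ (f 0)); rewrite -fD !addr0. Qed.
Lemma afN x : f (- x) = - f x.
Proof. by apply/eqP; rewrite -addr_eq0 -fD addNr af0. Qed.
Lemma afB x y : f (x - y) = f x - f y.
Proof. by rewrite fD afN. Qed.
Lemma afMn x n : f (x *+ n) = f x *+ n.
Proof. by elim: n => [|n IH]; rewrite ?mulr0n ?af0 // !mulrS fD IH. Qed.
Lemma afMz x z : f (x *~ z) = f x *~ z.
Proof. case: z => n; first by rewrite -!pmulrn afMn.
by rewrite NegzE !mulrNz afN -!pmulrn afMn. Qed.
Lemma af_sum (I : Type) (r : seq I) (P : pred I) (F : I -> K) :
  f (\sum_(i <- r | P i) F i) = \sum_(i <- r | P i) f (F i).
Proof. elim: r => [|a r IH]; rewrite ?big_nil ?af0 // !big_cons.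
by case: (P a); rewrite ?fD IH. Qed.
End AddFun.

Lemma af_iter (K : zmodType) (f : K -> K) n : addfun f -> addfun (iter n f).
Proof. move=> fD; elim: n => [|n IH] x y //=. by rewrite IH fD. Qed.
Lemma af_comp (K : zmodType) (f g : K -> K) : addfun f -> addfun g -> addfun (f \o g).
Proof. by move=> fD gD x y /=; rewrite gD fD. Qed.

Definition chain (T : Type) (U : nat -> T -> Prop) := forall n x, U n x -> U n.+1 x.
Definition stab (T : Type) (U : nat -> T -> Prop) :=
  exists n0, forall n, (n0 <= n)%N -> forall x, U n x -> U n0 x.

Lemma chain_mono (T : Type) (U : nat -> T -> Prop) : chain U ->
  forall m n, (m <= n)%N -> forall x, U m x -> U n x.
Proof.
move=> hc m n; elim: n => [|n IH]; first by rewrite leqn0 => /eqP ->.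
rewrite leq_eqVlt => /orP [/eqP -> //|hmn] x hx; apply: hc; exact: IH.
Qed.

Definition subgrp (H : int -> Prop) :=
  [/\ H 0, (forall x y, H x -> H y -> H (x + y)) & (forall x, H x -> H (- x))].

Lemma subgrp_mul H x z : subgrp H -> H x -> H (x * z).
Proof.
case=> H0 HD HN hx.
have hn : forall n : nat, H (x *+ n) by elim=> [|n IH]; rewrite ?mulr0n // mulrS; apply: HD.
have e : forall n : nat, x * n%:Z = x *+ n by move=> n; rewrite -mulr_natr natz.
case: z => n; first by rewrite e; exact: hn.
by rewrite NegzE mulrN; apply: HN; rewrite e; exact: hn.
Qed.

Lemma acc_int (H : nat -> int -> Prop) : (forall n, subgrp (H n)) -> chain H -> stab H.
Proof.
move=> hs hc.
have aux : forall v n1 x, 0 < x -> x <= v%:Z -> H n1 x -> stab H.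
  elim=> [|v IH] n1 x x0 xv hx; first by move: (lt_le_trans x0 xv); rewrite ltxx.
  case: (classic (forall n, (n1 <= n)%N -> forall y, H n y -> (y %% x)%Z = 0)) => [hall|].
    exists n1 => n hn y hy; rewrite (divz_eq y x) (hall n hn y hy) addr0 mulrC.
    exact: subgrp_mul.
  move/not_all_ex_not => [n /not_all_ex_not [hn /not_all_ex_not [y /not_all_ex_not [hy hyx]]]].
  have xn : H n x by exact: (chain_mono hc hn).
  have hm : H n (y %% x)%Z.
    have -> : (y %% x)%Z = y + - ((y %/ x)%Z * x) by rewrite {2}(divz_eq y x); lia.
    case: (hs n) => _ HD HN; apply: HD => //; apply: HN; rewrite mulrC; exact: subgrp_mul.
  have x0' : x != 0 by rewrite gt_eqF.
  apply: (IH n (y %% x)%Z) => //.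
  - by rewrite lt_def; apply/andP; split; [apply/eqP|exact: modz_ge0].
  - have := ltz_pmod y x0; lia.
case: (classic (exists n x, H n x /\ x != 0)) => [[n1 [x [hx xn0]]]|hno].
  have hax : H n1 `|x|.
    case: (ltrP 0 x) => h; first by rewrite gtr0_norm.
    by rewrite ler0_norm //; case: (hs n1) => _ _; apply.
  apply: (aux `|x|%N n1 `|x|) => //; first by rewrite normr_gt0.
exists 0%N => n _ x hx.
have -> : x = 0 by apply: contra_not_eq (fun h => hno (ex_intro _ n (ex_intro _ x (conj hx h)))).
by case: (hs 0%N).
Qed.

Lemma acc_double (J : nat -> nat -> int -> Prop) : (forall n d, subgrp (J n d)) ->
  (forall n d c, J n d c -> J n.+1 d c) -> (forall n d c, J n d c -> J n d.+1 c) ->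
  exists N, forall n, (N <= n)%N -> forall d c, J n d c -> J N d c.
Proof.
move=> hs hn hd.
have mono : forall m n d e c, (m <= n)%N -> (d <= e)%N -> J m d c -> J n e c.
  move=> m n d e c hmn hde h.
  have h1 : J n d c by exact: (@chain_mono _ (fun n => J n d) (fun n => hn n d) m n hmn).
  exact: (@chain_mono _ (J n) (hd n) d e hde).
have [n1 hn1] : stab (fun n => J n n).
  apply: acc_int => // n c h; exact: (mono n n.+1 n n.+1).
have fin : forall m, exists M, forall d, (d < m)%N -> forall n, (M <= n)%N ->
    forall c, J n d c -> J M d c.
  elim=> [|m [M hM]]; first by exists 0%N.
  have [Md hMd] : stab (fun n => J n m) by apply: acc_int => // n; exact: hn.
  exists (maxn M Md) => d; rewrite ltnS leq_eqVlt => /orP [/eqP ->|hdm] n hnM c h.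
    apply: (mono Md _ m m) => //; first exact: leq_maxr.
    apply: (hMd n) => //; exact: leq_trans (leq_maxr _ _) hnM.
  apply: (mono M _ d d) => //; first exact: leq_maxl.
  apply: (hM d hdm n) => //; exact: leq_trans (leq_maxl _ _) hnM.
have [M hM] := fin n1.
exists (maxn n1 M) => n hN d c h.
case: (ltnP d n1) => hdn.
  apply: (mono M _ d d) => //; first exact: leq_maxr.
  apply: (hM d hdn n) => //; exact: leq_trans (leq_maxr _ _) hN.
apply: (mono n1 _ n1 d) => //; first exact: leq_maxl.
apply: (hn1 (maxn n d)).
  exact: leq_trans (leq_maxl _ _) (leq_trans hN (leq_maxl _ _)).
apply: (mono n _ d _) => //; [exact: leq_maxl|exact: leq_maxr].
Qed.

Definition ideal (I : {poly int} -> Prop) :=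
  [/\ I 0, (forall f g, I f -> I g -> I (f + g)), (forall f, I f -> I (- f))
    & (forall f, I f -> I (f * 'X))].

Lemma size_le_drop (p : {poly int}) d : (size p <= d.+1)%N -> p`_d = 0 -> (size p <= d)%N.
Proof.
rewrite leq_eqVlt => /orP [/eqP hs|] // hd.
have : lead_coef p = 0 by rewrite lead_coefE hs.
by move/eqP; rewrite lead_coef_eq0 => /eqP ->; rewrite size_poly0.
Qed.

Definition lcs (I : {poly int} -> Prop) d c :=
  exists f, [/\ I f, (size f <= d.+1)%N & f`_d = c].

Lemma ideal_sub (I I' : {poly int} -> Prop) : ideal I -> ideal I' ->
  (forall f, I f -> I' f) -> (forall d c, lcs I' d c -> lcs I d c) ->
  forall f, I' f -> I f.
Proof.
move=> [I0 ID IN IX] [I0' ID' IN' IX'] hsub hl f.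
have [s] := ubnP (size f); elim: s f => // s IH f hs If.
case hsf: (size f) => [|d].
  by move/eqP: hsf; rewrite size_poly_eq0 => /eqP ->.
have [h [Ih hsh hhd]] := hl d f`_d (ex_intro _ f (And3 If (eq_leq hsf) erefl)).
have hg : I (f - h).
  apply: IH; last by apply: ID' => //; apply: IN'; exact: hsub.
  apply: (@leq_ltn_trans d); last by rewrite -ltnS -hsf.
  apply: size_le_drop; last by rewrite coefB hhd subrr.
  by apply: leq_trans (size_polyD _ _) _; rewrite geq_max size_polyN hsf leqnn.
by rewrite -(subrK h f); apply: ID.
Qed.

Lemma hilbert (I : nat -> {poly int} -> Prop) : (forall n, ideal (I n)) -> chain I -> stab I.
Proof.
move=> hi hc.
have [N hN] : exists N, forall n, (N <= n)%N -> forall d c, lcs (I n) d c -> lcs (I N) d c.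
  apply: acc_double.
  - move=> n d; case: (hi n) => I0 ID IN IX; split.
    + by exists 0; rewrite size_poly0 coef0.
    + move=> x y [f [If hf fd]] [g [Ig hg gd]]; exists (f + g); split => //.
      * exact: ID.
      * by apply: leq_trans (size_polyD _ _) _; rewrite geq_max hf hg.
      * by rewrite coefD fd gd.
    + move=> x [f [If hf fd]]; exists (- f); split => //.
      * exact: IN.
      * by rewrite size_polyN.
      * by rewrite coefN fd.
  - by move=> n d c [f [If hf fd]]; exists f; split => //; apply: hc.
  - move=> n d c [f [If hf fd]]; case: (hi n) => I0 ID IN IX.
    exists (f * 'X); split => //; first exact: IX.
      have [->|fn0] := eqVneq f 0; first by rewrite mul0r size_poly0.
      by rewrite size_mulX.
    by rewrite coefMX.
exists N => n hn f hf.
apply: (ideal_sub (hi N) (hi n)) => //.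
- move=> g; exact: chain_mono hc _ _ hn g.
- exact: hN.
Qed.

Lemma int_ind3 (P : int -> Prop) : P 0 -> (forall n : nat, P n -> P n.+1) ->
  (forall n : nat, P (- n%:Z) -> P (- (n.+1)%:Z)) -> forall m, P m.
Proof.
move=> P0 HS HN [n|n]; first by elim: n.
rewrite NegzE; elim: n => [|n IH]; first by apply: (HN 0%N); rewrite oppr0.
exact: HN.
Qed.

Section Main.
Variables (K : zmodType) (phi phiinv : K -> K).
Hypotheses (phi_add : addfun phi) (phiK : cancel phi phiinv) (phiinvK : cancel phiinv phi).

Lemma phiinv_add : addfun phiinv.
Proof. by move=> x y; apply: (can_inj phiK); rewrite !phiinvK phi_add !phiinvK. Qed.

Notation zp := (zpow phi phiinv).

Lemma zpow_add m : addfun (zp m).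
Proof. case: m => n /=; apply: af_iter => //; exact: phiinv_add. Qed.

Lemma zpowS m x : zp (m + 1) x = phi (zp m x).
Proof.
case: m => [n|[|n]] //=.
- by rewrite addn1.
- by rewrite subn1 /= phiinvK.
Qed.

Lemma zpowP m x : zp (m - 1) x = phiinv (zp m x).
Proof. by rewrite -{2}[m](subrK 1) zpowS phiK. Qed.

Lemma zpowD m n x : zp (m + n) x = zp m (zp n x).
Proof.
elim/int_ind3: m => [|a IH|a IH]; first by rewrite add0r.
- have -> : (a.+1)%:Z + n = (a%:Z + n) + 1 by lia.
  by rewrite zpowS IH -zpowS; congr (zp _ _); lia.
- have -> : - (a.+1)%:Z + n = (- a%:Z + n) - 1 by lia.
  rewrite zpowP IH -zpowP; congr (zp _ _); lia.
Qed.

Lemma zpow0 x : zp 0 x = x. Proof. by []. Qed.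


Definition peval (p : {poly int}) (x : K) : K :=
  \sum_(i < size p) iter i phi x *~ p`_i.

Lemma peval_widen n (p : {poly int}) (x : K) : (size p <= n)%N ->
  peval p x = \sum_(i < n) iter i phi x *~ p`_i.
Proof.
move=> hn; rewrite /peval (big_ord_widen n (fun i => iter i phi x *~ p`_i)) //.
rewrite big_mkcond; apply: eq_bigr => i _; case: ifP => // /negbT.
by rewrite -leqNgt => h; rewrite nth_default // mulr0z.
Qed.

Lemma peval0 (x : K) : peval 0 x = 0.
Proof. by rewrite /peval size_poly0 big_ord0. Qed.

Lemma pevalD (p q : {poly int}) (x : K) : peval (p + q) x = peval p x + peval q x.
Proof.
rewrite (@peval_widen (maxn (size p) (size q))) ?size_polyD //.
rewrite (@peval_widen (maxn (size p) (size q)) p) ?leq_maxl //.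
rewrite (@peval_widen (maxn (size p) (size q)) q) ?leq_maxr //.
by rewrite -big_split; apply: eq_bigr => i _; rewrite coefD mulrzDr.
Qed.

Lemma pevalN (p : {poly int}) (x : K) : peval (- p) x = - peval p x.
Proof.
by rewrite /peval size_polyN -sumrN; apply: eq_bigr => i _; rewrite coefN mulrNz.
Qed.

Lemma peval_add (p : {poly int}) : addfun (peval p).
Proof.
move=> x y; rewrite /peval -big_split; apply: eq_bigr => i _.
by rewrite (af_iter _ phi_add) mulrzDl.
Qed.

Lemma iter_phi_comm i (x : K) : iter i phi (phi x) = phi (iter i phi x).
Proof. by rewrite -iterSr iterS. Qed.

Lemma peval_phi (p : {poly int}) (x : K) : peval p (phi x) = phi (peval p x).
Proof.
rewrite /peval (af_sum phi_add); apply: eq_bigr => i _.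
by rewrite (afMz phi_add) iter_phi_comm.
Qed.

Lemma pevalMX (p : {poly int}) (x : K) : peval (p * 'X) x = phi (peval p x).
Proof.
have [->|pn0] := eqVneq p 0; first by rewrite mul0r !peval0 (af0 phi_add).
rewrite /peval size_mulX // big_ord_recl coefMX /= mulr0z add0r.
rewrite (af_sum phi_add); apply: eq_bigr => i _.
by rewrite coefMX /= (afMz phi_add).
Qed.

Lemma pevalC (c : int) (x : K) : peval c%:P x = x *~ c.
Proof.
rewrite (@peval_widen 1) ?size_polyC ?leq_b1 //.
by rewrite big_ord1 coefC.
Qed.

Lemma pevalZ (c : int) (p : {poly int}) (x : K) : peval (c%:P * p) x = peval p x *~ c.
Proof.
rewrite mul_polyC (@peval_widen (size p)) ?size_scale_leq //.
rewrite /peval (af_sum (fun u v => mulrzDl c u v)).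
by apply: eq_bigr => i _; rewrite coefZ mulrzA mulrzAC.
Qed.

Lemma pevalM (p q : {poly int}) (x : K) : peval (p * q) x = peval p (peval q x).
Proof.
elim/poly_ind: p => [|p c IH]; first by rewrite mul0r !peval0.
by rewrite mulrDl mulrAC !pevalD pevalZ !pevalMX IH pevalC.
Qed.

Lemma peval1 (x : K) : peval 1 x = x.
Proof. by rewrite pevalC. Qed.

Lemma pevalXn n (x : K) : peval ('X^n) x = iter n phi x.
Proof.
elim: n => [|n IH]; first by rewrite expr0 peval1.
by rewrite exprSr pevalMX IH.
Qed.

Lemma pevalMn (p : {poly int}) n (x : K) : peval (p *+ n) x = peval p x *+ n.
Proof.
elim: n => [|n IH]; first by rewrite !mulr0n peval0.
by rewrite !mulrS pevalD IH.
Qed.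

Lemma peval_sum (I : Type) (r : seq I) (P : pred I) (F : I -> {poly int}) (x : K) :
  peval (\sum_(i <- r | P i) F i) x = \sum_(i <- r | P i) peval (F i) x.
Proof.
elim: r => [|a r IH]; rewrite ?big_nil ?peval0 // !big_cons.
by case: (P a); rewrite ?pevalD IH.
Qed.


Definition submod (U : K -> Prop) :=
  [/\ U 0, (forall x y, U x -> U y -> U (x + y)), (forall x, U x -> U (- x))
    & (forall x, U x -> U (phi x))].

Fixpoint span (A : seq K) (x : K) : Prop :=
  match A with
  | [::] => x = 0
  | a :: A' => exists f v, span A' v /\ x = peval f a + v
  end.

Lemma span_submod A : submod (span A).
Proof.
elim: A => [|a A [S0 SD SN SX]] /=.
  split => //; [by move=> x y -> ->; rewrite addr0 | by move=> x ->; rewrite oppr0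
               | by move=> x ->; rewrite (af0 phi_add)].
split.
- by exists 0, 0; rewrite peval0 addr0.
- move=> x y [f [v [hv ->]]] [g [w [hw ->]]]; exists (f + g), (v + w); split; first exact: SD.
  by rewrite pevalD addrACA.
- move=> x [f [v [hv ->]]]; exists (- f), (- v); split; first exact: SN.
  by rewrite pevalN opprD.
- move=> x [f [v [hv ->]]]; exists (f * 'X), (phi v); split; first exact: SX.
  by rewrite pevalMX phi_add.
Qed.

Lemma noeth A (U : nat -> K -> Prop) : (forall n, submod (U n)) -> chain U ->
  (forall n x, U n x -> span A x) -> stab U.
Proof.
elim: A U => [|a A IH] U hU hc hA.
  exists 0%N => n _ x hx; move: (hA n x hx) => /= ->; by case: (hU 0%N).
pose V n x := U n x /\ span A x.
have [n1 hn1] : stab V.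
  apply: IH.
  - move=> n; case: (hU n) => U0 UD UN UX; case: (span_submod A) => S0 SD SN SX.
    split; first by split.
    + by move=> x y [? ?] [? ?]; split; [apply: UD|apply: SD].
    + by move=> x [? ?]; split; [apply: UN|apply: SN].
    + by move=> x [? ?]; split; [apply: UX|apply: SX].
  - by move=> n x [? ?]; split => //; apply: hc.
  - by move=> n x [].
pose I n f := exists v, span A v /\ U n (peval f a + v).
have [n2 hn2] : stab I.
  apply: hilbert.
  - move=> n; case: (hU n) => U0 UD UN UX; case: (span_submod A) => S0 SD SN SX.
    split.
    + by exists 0; rewrite peval0 addr0.
    + move=> f g [v [hv hf]] [w [hw hg]]; exists (v + w); split; first exact: SD.
      by rewrite pevalD addrACA; apply: UD.
    + move=> f [v [hv hf]]; exists (- v); split; first exact: SN.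
      by rewrite pevalN -opprD; apply: UN.
    + move=> f [v [hv hf]]; exists (phi v); split; first exact: SX.
      by rewrite pevalMX -phi_add; apply: UX.
  - by move=> n f [v [hv hf]]; exists v; split => //; apply: hc.
exists (maxn n1 n2) => n hn u hu.
have [f [v [hv eu]]] := hA n u hu.
have hIn : I n f by exists v; rewrite -eu.
have [w [hw hw0]] : I (maxn n1 n2) f.
  apply: (chain_mono (U:=I)) (leq_maxr n1 n2) _ _; last first.
    by apply: (hn2 n) => //; exact: leq_trans (leq_maxr _ _) hn.
  by move=> m g [z [hz hg]]; exists z; split => //; apply: hc.
have hwn : U n (peval f a + w) by exact: (chain_mono hc hn).
have hz : V n (v - w).
  case: (hU n) => U0 UD UN UX; case: (span_submod A) => S0 SD SN SX.
  split; last by apply: SD => //; apply: SN.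
  have -> : v - w = u + - (peval f a + w) by rewrite eu; rewrite opprD addrACA subrr add0r.
  by apply: UD => //; apply: UN.
have hz1 : V n1 (v - w) by apply: (hn1 n) => //; exact: leq_trans (leq_maxl _ _) hn.
have hz2 : U (maxn n1 n2) (v - w) by case: hz1 => h _; exact: (chain_mono hc (leq_maxl n1 n2)).
case: (hU (maxn n1 n2)) => _ UD _ _.
have -> : u = (peval f a + w) + (v - w) by rewrite eu addrACA subrr addr0.
exact: UD.
Qed.


Definition hpoly n : {poly int} := ('X^(n`!) - 1) ^+ n.

Lemma dvdX a b : exists q : {poly int}, 'X^(a * b) - 1 = q * ('X^a - 1).
Proof.
exists (\sum_(i < b) ('X^a) ^+ (b.-1 - i) * 1 ^+ i).
by rewrite exprM; have := subrXX ('X^a) (1 : {poly int}) b; rewrite expr1n => ->; rewrite mulrC.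
Qed.

Lemma dvdXd a c : (a %| c)%N -> exists q : {poly int}, 'X^c - 1 = q * ('X^a - 1).
Proof. by move=> /dvdnP [b ->]; rewrite mulnC; exact: dvdX. Qed.

Lemma peval_iter (q : {poly int}) j (x : K) : peval q (iter j phi x) = iter j phi (peval q x).
Proof. by elim: j => [|j IH] //=; rewrite peval_phi IH. Qed.

Lemma pevalX1 p (x : K) : iter p phi x = x -> peval ('X^p - 1) x = 0.
Proof. by move=> h; rewrite pevalD pevalN pevalXn peval1 h subrr. Qed.

Lemma hpoly_chain n : exists q, hpoly n.+1 = q * hpoly n.
Proof.
have [q hq] := dvdXd (dvdn_mull n.+1 (dvdnn n`!)).
exists (q ^+ n.+1 * ('X^(n`!) - 1)).
by rewrite /hpoly factS hq exprMn [(_ - 1) ^+ n.+1]exprS mulrA.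
Qed.

Lemma key (A : seq K) : (forall y, exists J, span A (iter J phi y)) ->
  exists n0, forall z y, in_Pphi phi z -> z = peval (hpoly n0) y -> z = 0.
Proof.
move=> hgen.
pose U n x := span A x /\ peval (hpoly n) x = 0.
have [n0 hn0] : stab U.
  apply: (@noeth A).
  - move=> n; case: (span_submod A) => S0 SD SN SX; split.
    + by split => //; exact: (af0 (peval_add _)).
    + by move=> x y [? hx] [? hy]; split; [exact: SD|rewrite peval_add hx hy addr0].
    + by move=> x [? hx]; split; [exact: SN|rewrite (afN (peval_add _)) hx oppr0].
    + by move=> x [? hx]; split; [exact: SX|rewrite peval_phi hx (af0 phi_add)].
  - move=> n x [hs hx]; split => //; have [q ->] := hpoly_chain n.
    by rewrite pevalM hx (af0 (peval_add _)).
  - by move=> n x [].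
exists n0 => z y [p [hp hz]] ez.
have [J hJ] := hgen y.
pose y' := iter J phi y; pose z' := iter J phi z.
have ez' : z' = peval (hpoly n0) y' by rewrite /z' /y' peval_iter ez.
have hz' : iter p phi z' = z' by rewrite /z' -iterD addnC iterD hz.
have hU : U (p + n0)%N y'.
  split => //.
  have hpc : (0 < p <= p + n0)%N by rewrite hp leq_addr.
  have [qa ea] := dvdXd (dvdn_fact hpc).
  have hd : (n0`! %| (p + n0)`!)%N.
    by rewrite -(ffact_fact (leq_addr n0 p)) addKn dvdn_mull.
  have [qb eb] := dvdXd hd.
  rewrite /hpoly exprD {1}ea eb !exprMn pevalM (pevalM (qb ^+ n0)).
  rewrite -[('X^(n0`!) - 1) ^+ n0]/(hpoly n0) -ez'.
  set w := peval (qb ^+ n0) z'.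
  have hw : iter p phi w = w by rewrite /w -peval_iter hz'.
  have -> : ('X^p - 1 : {poly int})^+p = ('X^p - 1)^+p.-1 * ('X^p - 1) by rewrite -exprSr prednK.
  by rewrite pevalM pevalM pevalX1 // !(af0 (peval_add _)).
have [_ h0] := hn0 (p + n0)%N (leq_addl _ _) y' hU.
have hz0 : z' = 0 by rewrite ez' h0.
have hK : forall j (x : K), iter j phiinv (iter j phi x) = x.
  by elim=> [|j IH] x //; rewrite iterSr iterS phiK IH.
by rewrite -(hK J z) -/z' hz0 (af0 (af_iter _ phiinv_add)).
Qed.


Lemma span_gen (A : seq K) (a : K) (f : {poly int}) : a \in A -> span A (peval f a).
Proof.
elim: A => [|b A IH] //=; rewrite inE => /orP [/eqP ->|ha].
  by exists f, 0; split; [case: (span_submod A)|rewrite addr0].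
by exists 0, (peval f a); split; [exact: IH|rewrite peval0 add0r].
Qed.

Lemma span_sum (A : seq K) (I : eqType) (r : seq I) (F : I -> K) :
  (forall i, i \in r -> span A (F i)) -> span A (\sum_(i <- r) F i).
Proof.
case: (span_submod A) => S0 SD _ _.
elim: r => [|i r IH] h; first by rewrite big_nil.
rewrite big_cons; apply: SD; first by apply: h; rewrite inE eqxx.
by apply: IH => j hj; apply: h; rewrite inE hj orbT.
Qed.

Variable S : seq (K * int).
Definition AA := map fst S.
Definition BB := (\max_(s <- S) `|s.2|)%N.

Lemma word (w : seq (K * int)) (J : nat) : all (mem S) w -> (BB * size w <= J)%N ->
  exists l : seq (nat * K), [/\ size l = size w,
    all (fun q => (q.1 <= J + BB * size w)%N && (q.2 \in AA)) l &
    iter J phi (sd_prod phi phiinv w).1 = \sum_(q <- l) iter q.1 phi q.2].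
Proof.
elim: w J => [|s w IH] J.
  by move=> _ _; exists [::]; rewrite big_nil /= (af0 (af_iter _ phi_add)).
move=> /= /andP [hs hw] hJ.
have hs2 : (`|s.2| <= BB)%N by apply: (leq_bigmax_seq (F := fun s => `|s.2|%N)).
pose J' := absz (J%:Z + s.2).
have eJ' : J'%:Z = J%:Z + s.2 by rewrite /J' gez0_abs //; move: hJ; rewrite mulnS; lia.
have hJ' : (BB * size w <= J')%N by move: hJ; rewrite mulnS; lia.
have [l' [hl1 hl2 hl3]] := IH J' hw hJ'.
exists ((J, s.1) :: l'); split; first by rewrite /= hl1.
  rewrite /= leq_addr (map_f fst hs) /=.
  apply/allP => q hq; move/allP: hl2 => /(_ q hq) /andP [h1 ->]; rewrite andbT.
  apply: (leq_trans h1); move: eJ'; rewrite mulnS; lia.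
rewrite big_cons /= (af_iter _ phi_add); congr (_ + _).
have -> : iter J phi (zpow phi phiinv s.2 (sd_prod phi phiinv w).1) =
    zpow phi phiinv (J%:Z + s.2) (sd_prod phi phiinv w).1 by rewrite zpowD.
by rewrite -eJ' /= hl3.
Qed.

Hypothesis S_gen : generates phi phiinv S.

Lemma hgen y : exists J, span AA (iter J phi y).
Proof.
have [w [hw ey]] := S_gen (y, 0).
have [l [_ hl he]] := word (J := (BB * size w)%N) hw (leqnn _).
exists (BB * size w)%N; have -> : y = (sd_prod phi phiinv w).1 by rewrite -ey.
rewrite he; apply: span_sum => q hq; move/allP: hl => /(_ q hq) /andP [_ ha].
by rewrite -pevalXn; exact: span_gen.
Qed.


Lemma leq_powb m n e : (m <= n)%N -> (m ^ e <= n ^ e)%N.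
Proof. by move=> h; elim: e => [|e IH] //; rewrite !expnS leq_mul. Qed.

Lemma ffact_le_pow q i : (q ^_ i <= q ^ i)%N.
Proof.
elim: i q => [|i IH] q //; rewrite ffactnS expnS leq_mul //.
apply: leq_trans (IH q.-1) _; apply: leq_powb; exact: leq_pred.
Qed.

Lemma bin_le_pow q i : ('C(q, i) <= q ^ i)%N.
Proof.
apply: leq_trans (ffact_le_pow q i); rewrite -bin_ffact.
by rewrite leq_pmulr // fact_gt0.
Qed.

Lemma iter_phi_inj j : injective (iter j phi).
Proof.
have hK : forall (x : K), iter j phiinv (iter j phi x) = x.
  by elim: j => [|j IH] x //; rewrite iterSr iterS phiK IH.
exact: can_inj hK.
Qed.

Lemma iter_fix_mul (f : K -> K) p m x : iter p f x = x -> iter (p * m) f x = x.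
Proof. by move=> h; elim: m => [|m IH]; rewrite ?muln0 // mulnS iterD IH h. Qed.

Lemma per_diff J e e' : in_Pphi phi e -> in_Pphi phi e' ->
  in_Pphi phi (iter J phi e - iter J phi e').
Proof.
move=> [p [hp he]] [p' [hp' he']]; exists (p * p')%N; split; first by rewrite muln_gt0 hp.
rewrite (afB (af_iter _ phi_add)) -!iterD !(addnC _ J) !iterD.
by rewrite iter_fix_mul // mulnC iter_fix_mul.
Qed.

Section Count.
Variable n0 : nat.

Definition dpol : {poly int} := 'X^(n0`!) - 1.
Definition inT (x : K) := exists y, x = peval (hpoly n0) y.
Definition SI := [seq (s, i) | s <- iota 0 (n0`!), i <- iota 0 n0].
Definition ubas : seq K :=
  [seq peval ('X^(q.2.1) * dpol ^+ q.2.2) q.1 | q <- [seq (a, si) | a <- AA, si <- SI]].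
Definition lin (c : 'I_(size ubas) -> int) := \sum_(i < size ubas) ubas`_i *~ c i.
Definition good (l : nat) (x : K) :=
  exists c : 'I_(size ubas) -> int, (forall i, (`|c i| <= l)%N) /\ inT (x - lin c).

Lemma inTD x y : inT x -> inT y -> inT (x + y).
Proof. by move=> [a ->] [b ->]; exists (a + b); rewrite peval_add. Qed.
Lemma inTN x : inT x -> inT (- x).
Proof. by move=> [a ->]; exists (- a); rewrite (afN (peval_add _)). Qed.
Lemma inT0 : inT 0.
Proof. by exists 0; rewrite (af0 (peval_add _)). Qed.

Lemma good_mono l l' x : (l <= l')%N -> good l x -> good l' x.
Proof. by move=> h [c [hc hx]]; exists c; split => // i; exact: leq_trans (hc i) h. Qed.

Lemma good_add l1 l2 x y : good l1 x -> good l2 y -> good (l1 + l2) (x + y).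
Proof.
move=> [c1 [h1 hx]] [c2 [h2 hy]]; exists (fun i : 'I_(size ubas) => c1 i + c2 i); split.
  by move=> i; move: (h1 i) (h2 i); lia.
have -> : x + y - lin (fun i : 'I_(size ubas) => c1 i + c2 i) = (x - lin c1) + (y - lin c2).
  rewrite /lin (eq_bigr (fun i : 'I_(size ubas) => ubas`_i *~ c1 i + ubas`_i *~ c2 i)); last first.
    by move=> i _; rewrite mulrzDr.
  by rewrite big_split /= opprD addrACA.
exact: inTD.
Qed.

Lemma good0 : good 0 0.
Proof.
exists (fun _ : 'I_(size ubas) => 0); split => //; rewrite /lin big1 ?subrr; first exact: inT0.
by move=> i _; rewrite mulr0z.
Qed.

Lemma good_T x : inT x -> good 0 x.
Proof.
move=> hx; exists (fun _ : 'I_(size ubas) => 0); split => //; rewrite /lin big1 ?subr0 //.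
Qed.

Lemma good_basis x : x \in ubas -> good 1 x.
Proof.
move=> hx; have hi : (index x ubas < size ubas)%N by rewrite index_mem.
exists (fun i : 'I_(size ubas) => if val i == index x ubas then 1 else 0); split.
  by move=> i; case: ifP.
rewrite /lin (bigD1 (Ordinal hi)) //= eqxx mulr1z big1 ?addr0.
  by rewrite nth_index // subrr; exact: inT0.
move=> j hj; case: ifP => [/eqP h|_]; last by rewrite mulr0z.
have hjo : j = Ordinal hi by apply: val_inj => /=; rewrite h.
by rewrite hjo eqxx in hj.
Qed.

Lemma good_Mn l x m : good l x -> good (l * m) (x *+ m).
Proof.
move=> h; elim: m => [|m IH]; first by rewrite muln0 mulr0n; exact: good0.
by rewrite mulnS mulrS; apply: good_add.
Qed.

Lemma good_sumo l (F : nat -> K) n : (forall i, (i < n)%N -> good l (F i)) ->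
  good (l * n) (\sum_(i < n) F i).
Proof.
elim: n => [|n IH] h; first by rewrite big_ord0 muln0; exact: good0.
rewrite big_ord_recr /= mulnS addnC; apply: good_add; last exact: h.
by apply: IH => i hi; apply: h; exact: ltnW.
Qed.

Lemma good_suml l (I : eqType) (r : seq I) (F : I -> K) :
  (forall i, i \in r -> good l (F i)) -> good (l * size r) (\sum_(i <- r) F i).
Proof.
elim: r => [|i r IH] h; first by rewrite big_nil muln0; exact: good0.
rewrite big_cons /= mulnS; apply: good_add; first by apply: h; rewrite inE eqxx.
by apply: IH => j hj; apply: h; rewrite inE hj orbT.
Qed.

Lemma good_pow a j : a \in AA -> good (j.+1 ^ n0.+1) (iter j phi a).
Proof.
move=> ha.
pose N := n0`!; have N0 : (0 < N)%N by exact: fact_gt0.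
pose q := (j %/ N)%N; pose s := (j %% N)%N.
have hs : (s < N)%N by exact: ltn_pmod.
have hq : (q.+1 <= j.+1)%N by rewrite ltnS leq_div.
have eX : ('X^j : {poly int}) = 'X^s * (dpol + 1) ^+ q.
  by rewrite /dpol subrK -exprM -exprD mulnC addnC -divn_eq.
rewrite -pevalXn eX exprD1n mulr_sumr peval_sum.
rewrite (eq_bigr (fun i : 'I_q.+1 => peval ('X^s * dpol ^+ i) a *+ 'C(q, i))); last first.
  by move=> i _; rewrite mulrnAr pevalMn.
rewrite expnSr; apply: (good_mono (leq_mul (leqnn _) hq)).
apply: (good_sumo (F := fun i => peval ('X^s * dpol ^+ i) a *+ 'C(q, i))) => i hi.
case: (ltnP i n0) => hin.
  apply: (good_mono (l := (1 * 'C(q, i))%N)).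
    rewrite !mul1n; apply: leq_trans (bin_le_pow q i) _.
    apply: leq_trans (leq_powb i (leq_trans (leq_div j N) (leqnSn j))) _.
    by apply: leq_pexp2l => //; exact: ltnW.
  apply: good_Mn; apply: good_basis.
  apply: (map_f (fun q : K * (nat * nat) => peval ('X^(q.2.1) * dpol ^+ q.2.2) q.1)
    (x := (a, (s, i)))).
  apply: allpairs_f => //; apply: allpairs_f; rewrite mem_iota //= add0n //.
apply: (good_mono (l := (0 * 'C(q, i))%N)) => //; apply: good_Mn; apply: good_T.
exists (peval ('X^s * dpol ^+ (i - n0)) a).
by rewrite -pevalM /hpoly -/dpol mulrCA -exprD subnKC.
Qed.

End Count.

Lemma good_ball n0 r e : in_ball phi phiinv S r (e, 0) ->
  good n0 (r * (2 * BB * r).+1 ^ n0.+1) (iter (BB * r) phi e).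
Proof.
move=> [w [hw hsz he]].
have [l [hl1 hl2 hl3]] := word (J := (BB * r)%N) hw (leq_mul (leqnn _) hsz).
have -> : e = (sd_prod phi phiinv w).1 by rewrite -he.
rewrite hl3 mulnC; apply: (good_mono (l := ((2 * BB * r).+1 ^ n0.+1 * size l)%N)).
  by rewrite leq_mul // hl1.
apply: good_suml => q hq; move/allP: hl2 => /(_ q hq) /andP [h1 h2].
apply: (good_mono (l := (q.1.+1 ^ n0.+1)%N)); last exact: good_pow.
apply: leq_powb; rewrite ltnS; apply: leq_trans h1 _.
have : (BB * size w <= BB * r)%N by exact: leq_mul.
lia.
Qed.

Lemma count n0 r (s : seq K) :
  (forall z y, in_Pphi phi z -> z = peval (hpoly n0) y -> z = 0) -> uniq s ->
  (forall a, a \in s -> in_Pphi phi a /\ in_ball phi phiinv S r (a, 0)) ->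
  (size s <= ((2 * (r * (2 * BB * r).+1 ^ n0.+1)).+1) ^ size (ubas n0))%N.
Proof.
move=> hk.
set L := (r * _)%N.
pose T := {ffun 'I_(size (ubas n0)) -> 'I_(2 * L).+1}.
pose dec (c : T) := fun i => ((c i : nat)%:Z - L%:Z).
pose R e (c : T) := in_Pphi phi e /\ inT n0 (iter (BB * r) phi e - lin (dec c)).
have enc : forall e, in_Pphi phi e -> in_ball phi phiinv S r (e, 0) -> exists c : T, R e c.
  move=> e hp hb; have [c0 [hc0 hin]] := good_ball n0 hb.
  exists [ffun i => inord (absz (c0 i + L%:Z))]; split => //.
  suff -> : lin (dec [ffun i => inord (absz (c0 i + L%:Z))]) = lin c0 by [].
  apply: eq_bigr => i _; congr (_ *~ _); rewrite /dec ffunE inordK.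
    by move: (hc0 i); lia.
  by move: (hc0 i); lia.
have inj : forall e e' c, R e c -> R e' c -> e = e'.
  move=> e e' c [hp hin] [hp' hin']; apply: (@iter_phi_inj (BB * r)%N).
  apply/eqP; rewrite -subr_eq0; apply/eqP.
  have [y hy] := inTD hin (inTN hin').
  apply: (hk _ y (per_diff _ hp hp')); rewrite -hy.
  by rewrite opprB addrA subrK.
have main : forall s : seq K, uniq s ->
    (forall a, a \in s -> in_Pphi phi a /\ in_ball phi phiinv S r (a, 0)) ->
    exists cs : seq T, [/\ size cs = size s, uniq cs &
      forall c, c \in cs -> exists e, e \in s /\ R e c].
  clear s; elim=> [|e s IH] /=; first by move=> _ _; exists [::].
  move=> /andP [hes hu] hs.
  have [cs [h1 h2 h3]] := IH hu (fun a ha => hs a (mem_behead (s := e :: s) ha)).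
  have [he1 he2] := hs e (mem_head _ _).
  have [c hc] := enc e he1 he2.
  exists (c :: cs); split => /=; [by rewrite h1| |].
    rewrite h2 andbT; apply/negP => hcs; have [e' [he' hR]] := h3 c hcs.
    by move: hes; rewrite (inj _ _ _ hc hR) he'.
  move=> c'; rewrite inE => /orP [/eqP ->|hc']; first by exists e; rewrite mem_head.
  by have [e' [he' hR]] := h3 c' hc'; exists e'; rewrite inE he' orbT.
move=> hu hs; have [cs [h1 h2 _]] := main s hu hs.
rewrite -h1 -(card_uniqP h2).
apply: leq_trans (max_card _) _.
by rewrite card_ffun !card_ord.
Qed.

Lemma poly_bound B n0 n r :
  (((2 * (r * (2 * B * r).+1 ^ n0.+1)).+1) ^ n <=
    (2 * (2 * B).+1 ^ n0.+1 + 1) ^ n * r.+1 ^ (n0.+2 * n))%N.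
Proof.
rewrite mulnC expnM -expnMn; apply: leq_powb.
have h1 : ((2 * B * r).+1 ^ n0.+1 <= (2 * B).+1 ^ n0.+1 * r.+1 ^ n0.+1)%N.
  by rewrite -expnMn; apply: leq_powb; nia.
have h2 : (1 <= r.+1 ^ n0.+1)%N by rewrite expn_gt0.
rewrite (expnS r.+1 n0.+1).
move: h1 h2; set X := ((2 * B).+1 ^ n0.+1)%N; set Y := (r.+1 ^ n0.+1)%N; set Z := ((2 * B * r).+1 ^ n0.+1)%N.
nia.
Qed.

Theorem main_thm : exists C d : nat, forall (r : nat) (s : seq K), uniq s ->
    (forall a, a \in s -> in_Pphi phi a /\ in_ball phi phiinv S r (a, 0)) ->
    (size s <= C * r.+1 ^ d)%N.
Proof.
have [n0 hk] := key hgen.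
exists ((2 * (2 * BB).+1 ^ n0.+1 + 1) ^ size (ubas n0))%N, (n0.+2 * size (ubas n0))%N.
move=> r s hu hs; apply: leq_trans (count hk hu hs) _; exact: poly_bound.
Qed.

End Main.

Theorem corollary3p13 (K : zmodType) (phi phiinv : K -> K)
  (phi_add : forall x y : K, phi (x + y) = phi x + phi y)
  (phiK : cancel phi phiinv) (phiinvK : cancel phiinv phi)
  (S : seq (K * int))
  (S_sym : symmetric_set phi phiinv S)
  (S_gen : generates phi phiinv S) :
  exists C d : nat, forall (r : nat) (s : seq K), uniq s ->
    (forall a, a \in s -> in_Pphi phi a /\ in_ball phi phiinv S r (a, 0)) ->
    (size s <= C * r.+1 ^ d)%N.
Proof. exact: (main_thm phi_add phiK phiinvK S_gen). Qed.
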